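(* Let $L\in\mathsf{NTIME}(t(n),p(n))$ and let $V$ be a time-$O(t(n))$ verifier for $L$ using size-$O(p(n))$ certificates. Then $\mathrm{Ldim}(\mathcal{C}_{L,V})=1$.
   Context: Here $t(n),p(n)\ge n$ are growth functions. $\mathsf{NTIME}(t,p)$: languages decided by a time-$O(t(n))$ verifier with size-$O(p(n))$ certificates. Fixed code: polynomial-time $\mathrm{Enc}:\{0,1\}^k\to\{0,1\}^{ck}$, $\mathrm{Dec}$, constants $c>1$, $\varepsilon^\star>0$. For $z\in\{0,1\}^n$, $\textsc{Cert}_z:\{0,1\}^{n+\log(cp(n))}\to\{0,1\}$ is constant $0$ if $z\notin L$; otherwise with $w^\star\in\{0,1\}^{p(n)}$ the lexicographically first certificate with $V(z,w^\star)=1$, $\textsc{Cert}_z(x)=\mathrm{Enc}(w^\star)_i$ if $x=(z,i)$ ($i$ read as an index in $\{1,\dots,cp(n)\}$), else $0$; $\mathcal{C}_{L,V}=\{\textsc{Cert}_z:z\in\{0,1\}^n\}$. $\mathrm{Ldim}(\mathcal{C})$ (Littlestone dimension) is the optimal worst-case number of mistakes of an online learner for $\mathcal{C}$ (each round: adversary presents $x$, learner predicts, true label $f(x)$ of a fixed target $f\in\mathcal{C}$ revealed). *)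

(* Defs.v *)
From mathcomp Require Import all_boot.
Set Implicit Arguments. Unset Strict Implicit. Unset Printing Implicit Defensive.

(* A (deterministic) online learner over domain X: given the history of
   labelled examples seen so far and the current point, it predicts a label. *)
Definition learner (X : Type) := seq (X * bool) -> X -> bool.

Fixpoint mistakes_from (X : Type) (A : learner X) (f : X -> bool)
    (h : seq (X * bool)) (xs : seq X) : nat :=
  match xs with
  | [::] => 0
  | x :: xs' => (A h x != f x) + mistakes_from A f (rcons h (x, f x)) xs'
  end.

Definition mistakes (X : Type) (A : learner X) (f : X -> bool) (xs : seq X) :=
  mistakes_from A f [::] xs.

(* Ldim C = d : d is the optimal worst-case number of mistakes of an online
   learner for C: some learner never makes more than d mistakes on any target
   in C and any sequence of rounds, and every learner can be forced to make at
   least d mistakes. *)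
Definition Ldim_eq (X : Type) (C : (X -> bool) -> Prop) (d : nat) : Prop :=
  (exists A : learner X, forall f, C f -> forall xs, mistakes A f xs <= d) /\
  (forall A : learner X, exists f xs, C f /\ d <= mistakes A f xs).

Fixpoint lexle (s t : seq bool) : bool :=
  match s, t with
  | [::], _ => true
  | _ :: _, [::] => false
  | a :: s', b :: t' => (a < b) || ((a == b) && lexle s' t')
  end.

Definition bin (s : seq bool) : nat := foldl (fun (acc : nat) (b : bool) => (acc.*2 + nat_of_bool b)%N) 0 s.

Definition idxbits (p : nat -> nat) (c n : nat) : nat := up_log 2 (c * p n).

Definition wstar (p : nat -> nat) (V : seq bool -> seq bool -> bool) (n : nat)
    (z : n.-tuple bool) : option ((p n).-tuple bool) :=
  [pick w : (p n).-tuple bool |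
     V z w && [forall w' : (p n).-tuple bool, V z w' ==> lexle w w']].

(* A point x is read as x = (z', j)
   with z' its first n bits and j the number written (in binary) by its last
   log(c p(n)) bits; Cert_z(x) = Enc(w_star)_j (0-indexed) if z' = z and j is a valid
   index (j < c p(n)), and 0 otherwise; Cert_z is constantly 0 if z \notin L. *)
Definition Cert (p : nat -> nat) (c : nat) (Enc : seq bool -> seq bool)
    (L : pred (seq bool)) (V : seq bool -> seq bool -> bool) (n : nat)
    (z : n.-tuple bool) (x : (n + idxbits p c n).-tuple bool) : bool :=
  if L z then
    match wstar p V z with
    | Some w =>
        (take n x == z :> seq bool) &&
        (bin (drop n x) < c * p n) && nth false (Enc w) (bin (drop n x))
    | None => false
    end
  else false.

Definition CertClass (p : nat -> nat) (c : nat) (Enc : seq bool -> seq bool)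
    (L : pred (seq bool)) (V : seq bool -> seq bool -> bool) (n : nat)
    (f : (n + idxbits p c n).-tuple bool -> bool) : Prop :=
  exists z : n.-tuple bool, f = @Cert p c Enc L V n z.

(* Main.v *)
Require Import Defs.
From mathcomp Require Import all_boot.

Section S.
Variables (p : nat -> nat) (c : nat) (Enc : seq bool -> seq bool)
    (L : pred (seq bool)) (V : seq bool -> seq bool -> bool) (n : nat).

Local Notation T := ((n + idxbits p c n).-tuple bool).
Local Notation C := (@Cert p c Enc L V n).

Lemma cert_take {z : n.-tuple bool} {y : T} : C z y -> take n y = z.
Proof.
rewrite /Cert; case: (L z) => //; case: (wstar p V z) => // w.
by case/andP => /andP [/eqP -> _] _.
Qed.

Definition lrn : learner T := fun h x =>
  has (fun q : T * bool => q.2 && [exists z : n.-tuple bool, C z q.1 && C z x]) h.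

Lemma lrn_eq (z0 : n.-tuple bool) h x :
  (forall q, q \in h -> q.2 = C z0 q.1) -> lrn h x = has snd h && C z0 x.
Proof.
move=> Hc; rewrite /lrn; apply/idP/idP.
- case/hasP => q qh /andP [q2 /existsP [z /andP [h1 h2]]].
  have e1 : C z0 q.1 by rewrite -Hc.
  have ez : z = z0 by apply: val_inj; rewrite /= -(cert_take h1) (cert_take e1).
  by rewrite -ez h2 andbT; apply/hasP; exists q.
- case/andP => /hasP [q qh q2] hx; apply/hasP; exists q => //.
  rewrite q2 /=; apply/existsP; exists z0; by rewrite -Hc // q2 hx.
Qed.

Lemma lrn_bound (z0 : n.-tuple bool) xs : forall h,
  (forall q, q \in h -> q.2 = C z0 q.1) ->
  mistakes_from lrn (C z0) h xs <= ~~ has snd h.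
Proof.
elim: xs => [|x xs IH] h Hc /=; first by [].
have Hc' : forall q, q \in rcons h (x, C z0 x) -> q.2 = C z0 q.1.
  move=> q; rewrite mem_rcons in_cons => /orP [/eqP -> //|]; exact: Hc.
have := IH _ Hc'; rewrite has_rcons /= (@lrn_eq z0 h x Hc).
case: (has snd h) => /=.
- by rewrite eqxx orbT add0n.
- by case: (C z0 x) => /= [|]; [rewrite leqn0 => /eqP -> | rewrite add0n].
Qed.

End S.

Theorem claim25 (p : nat -> nat) (c : nat) (Enc : seq bool -> seq bool)
    (L : pred (seq bool)) (V : seq bool -> seq bool -> bool) (n : nat) :
  (forall m, m <= p m) ->
  1 < c ->
  (forall w, size (Enc w) = c * size w) ->
  (forall z : seq bool, L z <-> exists w : seq bool, size w = p (size z) /\ V z w) ->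
  0 < n ->
  (exists (z : n.-tuple bool) x, @Cert p c Enc L V n z x) ->
  Ldim_eq (@CertClass p c Enc L V n) 1.
Proof.
move=> _ _ _ _ n0 [z [x Hx]]; split.
- exists (lrn p c Enc L V n) => f [z0 ->] xs.
  by apply: (leq_trans (@lrn_bound p c Enc L V n z0 xs [::] _)) => // q; rewrite in_nil.
- move=> A.
  case Ha: (A [::] x).
  + pose z' := map_tuple negb z.
    have nz : z' != z.
      apply/eqP => /(congr1 (fun t : n.-tuple bool => head false t)).
      rewrite /z' /=; case: (tval z) (size_tuple z) => [|b s] /=.
        by move=> e; rewrite -e in n0.
      by case: b.
    exists (@Cert p c Enc L V n z'), [:: x]; split; first by exists z'.
    rewrite /mistakes /= Ha.
    case Hc: (@Cert p c Enc L V n z' x) => //.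
    have e1 := @cert_take p c Enc L V n _ _ Hc; have e2 := @cert_take p c Enc L V n _ _ Hx.
    have ez : z' = z by apply: val_inj; rewrite /= -e1 e2.
    by rewrite ez eqxx in nz.
  + exists (@Cert p c Enc L V n z), [:: x]; split; first by exists z.
    by rewrite /mistakes /= Ha Hx.
Qed.
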